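(* Let $\mathscr M$, $\mathscr N$ be modules over $\mathbb Z[\mathbb L]_{\mathrm{loc}}=\mathbb Z[\mathbb L,\mathbb L^{-1},(1-\mathbb L^n)^{-1}, n\ge1]$, and $\mathbf T=(T_1,\dots,T_r)$. If $a(\mathbf T)=\sum a_{\mathbf n}\mathbf T^{\mathbf n}\in\mathscr M[[\mathbf T]]_{\mathrm{int}}$ and $b(\mathbf T)=\sum b_{\mathbf n}\mathbf T^{\mathbf n}\in\mathscr N[[\mathbf T]]_{\mathrm{ssr}}$, then $a(\mathbf T)\otimes_{\mathscr H}b(\mathbf T):=\sum_{\mathbf n}a_{\mathbf n}\otimes b_{\mathbf n}\mathbf T^{\mathbf n}$ lies in $(\mathscr M\otimes_{\mathbb Z[\mathbb L]_{\mathrm{loc}}}\mathscr N)[[\mathbf T]]_{\mathrm{int}}$.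
   Context: For a module $\mathscr M$ over $\mathbb Z[\mathbb L,\mathbb L^{-1}]$, $\mathscr M[[\mathbf T]]_{\mathrm{ssr}}=\mathscr M[\mathbf T][(1-\mathbb L^m\mathbf T^{\mathbf n})^{-1}]_{m\in\mathbb Z_{\le0},\,\mathbf n\in\mathbb N^r\setminus\{0\}}$ (strongly rational series) and $\mathscr M[[\mathbf T]]_{\mathrm{int}}=\mathscr M[\mathbf T][(1-\mathbb L^m\mathbf T^{\mathbf n})^{-1}]_{m\in\mathbb Z_{<0},\,\mathbf n\in\mathbb N^r\setminus\{0\}}$ (integrable series), both regarded as submodules of $\mathscr M[[\mathbf T]]$ via $\frac1{1-\mathbb L^m\mathbf T^{\mathbf n}}=\sum_{l\ge0}(\mathbb L^m\mathbf T^{\mathbf n})^l$. *)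

(* Defs.v *)
From HB Require Import structures.
From mathcomp Require Import all_boot all_order all_algebra.
From mathcomp Require Import boolp.
From mathcomp Require Import ring.
Set Implicit Arguments. Unset Strict Implicit. Unset Printing Implicit Defensive.
Import GRing.Theory.
Local Open Scope ring_scope.

Definition QL := {fraction {poly int}}.
Local Notation "x %:F" := (@FracField.tofrac _ x).

Definition denom (k : nat) (s : seq nat) : {poly int} :=
  'X^k * \prod_(n <- s) (1 - 'X^n).

Definition is_zloc (x : QL) : Prop :=
  exists (k : nat) (s : seq nat) (p : {poly int}),
    all (fun n => 0 < n)%N s /\ (denom k s)%:F * x = p%:F.

Definition zloc_pred : {pred QL} := fun x => `[< is_zloc x >].

Lemma denomD k1 s1 k2 s2 : denom (k1 + k2) (s1 ++ s2) = denom k1 s1 * denom k2 s2.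
Proof. rewrite /denom exprD big_cat /=; ring. Qed.

Lemma zloc_subring_closed : subring_closed zloc_pred.
Proof.
split.
- apply/asboolP; exists 0%N, [::], 1; split => //.
  by rewrite /denom big_nil expr0 mulr1 mulr1.
- move=> x y /asboolP [k1 [s1 [p1 [H1 E1]]]] /asboolP [k2 [s2 [p2 [H2 E2]]]].
  apply/asboolP; exists (k1 + k2)%N, (s1 ++ s2), (denom k2 s2 * p1 - denom k1 s1 * p2).
  split; first by rewrite all_cat H1 H2.
  rewrite denomD; move: (denom k1 s1) (denom k2 s2) E1 E2 => D1 D2 E1 E2.
  rewrite !(tofracM, tofracB) -E1 -E2; ring.
- move=> x y /asboolP [k1 [s1 [p1 [H1 E1]]]] /asboolP [k2 [s2 [p2 [H2 E2]]]].
  apply/asboolP; exists (k1 + k2)%N, (s1 ++ s2), (p1 * p2).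
  split; first by rewrite all_cat H1 H2.
  rewrite denomD; move: (denom k1 s1) (denom k2 s2) E1 E2 => D1 D2 E1 E2.
  rewrite !tofracM -E1 -E2; ring.
Qed.

Record Zloc := ZLoc { zval : QL; zvalP : zval \in zloc_pred }.
HB.instance Definition _ := [isSub for zval].
HB.instance Definition _ := [Choice of Zloc by <:].
HB.instance Definition _ := GRing.isSubringClosed.Build _ zloc_pred zloc_subring_closed.
HB.instance Definition _ := [SubChoice_isSubComNzRing of Zloc by <:].


(** The element L = 'X of Z[L]_loc, and its integer powers L^m. *)
Definition Lq (m : int) : QL := ('X%:F) ^ m.

Lemma Lq_in (m : int) : Lq m \in zloc_pred.
Proof.
apply/asboolP; rewrite /Lq; case: m => k.
- exists 0%N, [::], ('X^k); split => //.
  by rewrite /denom big_nil expr0 mulr1 tofrac1 mul1r tofracXn.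
- exists k.+1, [::], 1; split => //.
  rewrite /denom big_nil mulr1 NegzE tofracXn tofrac1 -exprnN.
  rewrite divrr // unitfE expf_neq0 //.
  by rewrite tofrac_eq0 polyX_eq0.
Qed.

Definition Lpow (m : int) : Zloc := ZLoc (Lq_in m).

Definition mono (r : nat) := {ffun 'I_r -> nat}.
Definition msize r (n : mono r) : nat := (\sum_(i < r) n i)%N.
Definition mscale r (l : nat) (n : mono r) : mono r := [ffun i => (l * n i)%N].

(** Formal power series in T_1..T_r with coefficients in V are coefficient
    functions mono r -> V.  A series is a polynomial iff it has finite support. *)
Definition is_poly r (V : Type) (z : V) (f : mono r -> V) : Prop :=
  exists S : seq (mono r), forall n, n \notin S -> f n = z.

(** Cauchy product of a series g in Zloc[[T]] with a series f in V[[T]]: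
    (g f)_n = sum_{a <= n} g_a *: f_{n - a}. *)
Definition smul r (V : lmodType Zloc) (g : mono r -> Zloc) (f : mono r -> V)
  : mono r -> V := fun n =>
  \sum_(a : {ffun 'I_r -> 'I_(msize n).+1} | [forall i, (a i <= n i)%N])
     g [ffun i => nat_of_ord (a i)] *: f [ffun i => (n i - a i)%N].

(** The expansion of 1/(1 - L^m T^nv) = sum_{l >= 0} L^(m l) T^(l nv), for nv <> 0
    (a term T^(l nv) with nv <> 0 has l <= msize (l nv)). *)
Definition geom r (m : int) (nv : mono r) : mono r -> Zloc := fun e =>
  \sum_(l < (msize e).+1 | e == mscale l nv) Lpow (m * (l : nat)%:Z).

(** f lies in V[T][(1 - L^m T^nv)^{-1}]_{m allowed, nv <> 0}, viewed inside V[[T]]: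
    f = p * prod_i 1/(1 - L^{m_i} T^{nv_i}) with p a polynomial. *)
Definition ratser r (V : lmodType Zloc) (allowed : int -> bool)
    (f : mono r -> V) : Prop :=
  exists (p : mono r -> V) (s : seq (int * mono r)),
    is_poly 0 p /\
    all (fun mn => allowed mn.1 && (mn.2 != 0)) s /\
    forall n, f n = foldr (fun mn acc => smul (geom mn.1 mn.2) acc) p s n.

Definition is_int r (V : lmodType Zloc) (f : mono r -> V) : Prop :=
  ratser (fun m : int => m < 0) f.
Definition is_ssr r (V : lmodType Zloc) (f : mono r -> V) : Prop :=
  ratser (fun m : int => m <= 0) f.

Definition zlinear (U V : lmodType Zloc) (f : U -> V) : Prop :=
  forall (a : Zloc) (x y : U), f (a *: x + y) = a *: f x + f y.

Definition zbilinear (M N Q : lmodType Zloc) (t : M -> N -> Q) : Prop :=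
  (forall y, zlinear (fun x => t x y)) /\ (forall x, zlinear (t x)).

Definition is_tensor_product (M N P : lmodType Zloc) (t : M -> N -> P) : Prop :=
  zbilinear t /\
  forall (Q : lmodType Zloc) (beta : M -> N -> Q), zbilinear beta ->
    exists! phi : P -> Q, zlinear phi /\ forall x y, phi (t x y) = beta x y.

(* Main.v *)
Require Import Defs.
From HB Require Import structures.
From mathcomp Require Import all_boot all_order all_algebra.
From mathcomp Require Import boolp.
From mathcomp Require Import ring zify.
Set Implicit Arguments. Unset Strict Implicit. Unset Printing Implicit Defensive.
Import GRing.Theory Order.TTheory Num.Theory.
Local Open Scope ring_scope.

Section Mono.
Variable R : nat.
Implicit Types x y z u v n : mono R.

Definition madd x y : mono R := [ffun i => (x i + y i)%N].
Definition msub x y : mono R := [ffun i => (x i - y i)%N].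
Definition mle x y : bool := [forall i, (x i <= y i)%N].
Definition m0 : mono R := [ffun => 0%N].

Lemma mleP x y : reflect (forall i, (x i <= y i)%N) (mle x y).
Proof. exact: forallP. Qed.

Lemma maddC x y : madd x y = madd y x.
Proof. by apply/ffunP=> i; rewrite !ffunE addnC. Qed.
Lemma maddA x y z : madd x (madd y z) = madd (madd x y) z.
Proof. by apply/ffunP=> i; rewrite !ffunE addnA. Qed.
Lemma madd0 x : madd x m0 = x.
Proof. by apply/ffunP=> i; rewrite !ffunE addn0. Qed.
Lemma madd0l x : madd m0 x = x.
Proof. by apply/ffunP=> i; rewrite !ffunE add0n. Qed.
Lemma mscale0 v : mscale 0 v = m0.
Proof. by apply/ffunP=> i; rewrite !ffunE. Qed.
Lemma mscale1 v : mscale 1 v = v.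
Proof. by apply/ffunP=> i; rewrite !ffunE mul1n. Qed.
Lemma mscaleD a b v : mscale (a + b) v = madd (mscale a v) (mscale b v).
Proof. by apply/ffunP=> i; rewrite !ffunE mulnDl. Qed.
Lemma mscaleM a b v : mscale (a * b) v = mscale a (mscale b v).
Proof. by apply/ffunP=> i; rewrite !ffunE mulnA. Qed.
Lemma mscale_madd a u v : mscale a (madd u v) = madd (mscale a u) (mscale a v).
Proof. by apply/ffunP=> i; rewrite !ffunE mulnDr. Qed.

Lemma mle_madd x y n : mle (madd x y) n = mle x n && mle y (msub n x).
Proof.
apply/mleP/andP => [H|[/mleP H1 /mleP H2] i].
  split; apply/mleP => i; have := H i; rewrite !ffunE; move: (x i) (y i) (n i) => a b c; lia.
have := H1 i; have := H2 i; rewrite !ffunE; move: (x i) (y i) (n i) => a b c; lia.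
Qed.

Lemma msub_madd n x y : msub n (madd x y) = msub (msub n x) y.
Proof. by apply/ffunP=> i; rewrite !ffunE subnDA. Qed.

Lemma msubK n x : mle x n -> madd (msub n x) x = n.
Proof. by move/mleP=> H; apply/ffunP=> i; rewrite !ffunE subnK. Qed.

Lemma maddK x y : msub (madd x y) y = x.
Proof. by apply/ffunP=> i; rewrite !ffunE addnK. Qed.

Lemma mle_maddr x y : mle y (madd x y).
Proof. by apply/mleP=> i; rewrite !ffunE leq_addl. Qed.

Lemma msub0 n : msub n m0 = n.
Proof. by apply/ffunP=> i; rewrite !ffunE subn0. Qed.
Lemma mle0 n : mle m0 n.
Proof. by apply/mleP=> i; rewrite !ffunE. Qed.

Lemma msize_madd x y : msize (madd x y) = (msize x + msize y)%N.
Proof. by rewrite /msize -big_split; apply: eq_bigr => i _; rewrite ffunE. Qed.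

Lemma msize_mle x y : mle x y -> (msize x <= msize y)%N.
Proof. by move/mleP=> H; apply: leq_sum => i _. Qed.

Lemma msize_mscale l v : msize (mscale l v) = (l * msize v)%N.
Proof. by rewrite /msize big_distrr; apply: eq_bigr => i _; rewrite ffunE. Qed.

Lemma msize_gt0 v : v != m0 -> (0 < msize v)%N.
Proof.
move=> Hv; case: (posnP (msize v)) => // /eqP; rewrite /msize sum_nat_eq0 => /forallP H.
by case/eqP: Hv; apply/ffunP=> i; rewrite ffunE; apply/eqP; have := H i; rewrite implyTb.
Qed.

Lemma mle_scale_bound l v n : v != m0 -> mle (mscale l v) n -> (l <= msize n)%N.
Proof.
move=> Hv /msize_mle; rewrite msize_mscale => H; apply: leq_trans H.
by rewrite leq_pmulr // msize_gt0.
Qed.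

Lemma msize_msub n x : mle x n -> msize (msub n x) = (msize n - msize x)%N.
Proof.
move=> Hx; rewrite -{2}(msubK Hx) msize_madd; lia.
Qed.

Lemma coord_le_msize n i : (n i <= msize n)%N.
Proof. by rewrite /msize (bigD1 i) //= leq_addr. Qed.

End Mono.
Section Sums.
Variable V : zmodType.

Lemma sum_ext0 (F : nat -> V) K B : (forall l, (K <= l)%N -> F l = 0) -> (K <= B)%N ->
  \sum_(0 <= l < B) F l = \sum_(0 <= l < K) F l.
Proof.
move=> H HK; rewrite (big_cat_nat _ (n:=K)) //= [X in _ + X]big1_seq ?addr0 //.
by move=> i /andP[_]; rewrite mem_index_iota => /andP[/H ->].
Qed.

Lemma sum_ext0' (F : nat -> V) K B : (forall l, (K <= l)%N -> F l = 0) ->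
  (forall l, (B <= l)%N -> F l = 0) ->
  \sum_(0 <= l < B) F l = \sum_(0 <= l < K) F l.
Proof.
move=> HK HB; case: (leqP K B) => H; first exact: sum_ext0.
by symmetry; apply: sum_ext0 => //; apply: ltnW.
Qed.

Lemma mulsum (F : nat -> V) q B :
  \sum_(0 <= l < q * B) F l = \sum_(0 <= k < B) \sum_(0 <= r < q) F (q * k + r)%N.
Proof.
elim: B => [|B IH]; first by rewrite muln0 !big_geq.
rewrite big_nat_recr //= -IH mulnS addnC (big_cat_nat _ (n:=q * B)) //=; last by rewrite leq_addr.
congr (_ + _); rewrite -{1}[(q * B)%N]add0n big_addn addKn.
by apply: eq_bigr => i _; rewrite addnC.
Qed.

Lemma modsum (F : nat -> V) q B : (0 < q)%N -> (forall l, (B <= l)%N -> F l = 0) ->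
  \sum_(0 <= l < B) F l = \sum_(0 <= r < q) \sum_(0 <= k < B) F (q * k + r)%N.
Proof.
move=> Hq HB; rewrite -(sum_ext0 (B := q * B) HB); last by rewrite leq_pmull.
by rewrite mulsum exchange_big.
Qed.

Lemma shiftsum (F : nat -> V) a B : (a <= B)%N -> (forall l, (B <= l)%N -> F l = 0) ->
  \sum_(0 <= l < B | (a <= l)%N) F l = \sum_(0 <= u < B) F (a + u)%N.
Proof.
move=> HaB HB.
rewrite (big_cat_nat _ (n:=a)) //= big1_seq ?add0r; last first.
  by move=> i /andP[Hi]; rewrite mem_index_iota => /andP[_]; rewrite ltnNge Hi.
rewrite big_nat_cond (eq_bigl (fun i => (a <= i < B)%N && true)); last first.
  by move=> i; rewrite andbT; case: (a <= i)%N; rewrite ?andbT ?andbF.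
rewrite -big_nat_cond -{1}[a]add0n big_addn.
rewrite (sum_ext0 (K := (B - a)%N) (B := B)) ?leq_subr //.
  by apply: eq_bigr => i _; rewrite addnC.
by move=> l Hl; apply: HB; lia.
Qed.

Lemma pairsum (F : nat -> nat -> V) B :
  (forall l1 l2, (B <= l1)%N || (B <= l2)%N -> F l1 l2 = 0) ->
  \sum_(0 <= l1 < B) \sum_(0 <= l2 < B) F l1 l2 =
  \sum_(0 <= k < B) \sum_(0 <= u < B) F (k + u)%N k +
  \sum_(0 <= k < B) \sum_(0 <= u < B) F k (k + 1 + u)%N.
Proof.
move=> H.
have E1 : forall l1, (l1 < B)%N -> \sum_(0 <= l2 < B) F l1 l2 =
   \sum_(0 <= l2 < B | (l2 <= l1)%N) F l1 l2 + \sum_(0 <= u < B) F l1 (l1 + 1 + u)%N.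
  move=> l1 Hl1; rewrite (big_cat_nat _ (n := l1.+1)) //=.
  congr (_ + _).
    rewrite [RHS](big_cat_nat _ (n := l1.+1)) //= [X in _ = _ + X]big1_seq ?addr0.
      rewrite big_nat_cond [RHS]big_nat_cond; apply: eq_bigl => i.
      by rewrite andbT ltnS; case: (i <= l1)%N.
    by move=> i /andP[Hi]; rewrite mem_index_iota => /andP[H2]; rewrite ltnNge Hi in H2.
  have -> : l1.+1 = (0 + l1.+1)%N by [].
  rewrite big_addn.
  rewrite (sum_ext0 (K := (B - l1.+1)%N) (B := B)) ?leq_subr //.
    by apply: eq_bigr => i _; congr (F _ _); lia.
  by move=> l Hl; apply: H; apply/orP; right; lia.
rewrite big_nat [X in X = _](eq_bigr _ (fun i Hi => E1 i Hi)) -big_nat big_split /=.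
congr (_ + _).
rewrite (eq_bigr (fun l1 => \sum_(0 <= l2 < B) if (l2 <= l1)%N then F l1 l2 else 0));
  last by move=> i _; rewrite big_mkcond.
rewrite exchange_big /= big_nat [RHS]big_nat; apply: eq_bigr => l2 /andP[_ Hl2].
rewrite -big_mkcond /= shiftsum //; first exact: ltnW.
by move=> l Hl; apply: H; rewrite Hl.
Qed.
End Sums.

Lemma Lpow_add (a b : int) : Lpow (a + b) = Lpow a * Lpow b.
Proof.
apply: val_inj => /=; rewrite /Lq expfzDr //.
by rewrite tofrac_eq0 polyX_eq0.
Qed.

Lemma Lpow0 : Lpow 0 = 1.
Proof. by apply: val_inj => /=; rewrite /Lq expr0z. Qed.

Section Ser.
Variable R : nat.
Variable V : lmodType Zloc.
Implicit Types u v n w : mono R.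
Implicit Types f g : mono R -> V.

Definition shift (m : int) u f : mono R -> V := fun n =>
  if mle u n then Lpow m *: f (msub n u) else 0.

Definition gm (m : int) v f : mono R -> V := fun n =>
  \sum_(0 <= l < (msize n).+1) shift (m * l%:Z) (mscale l v) f n.

Definition mon w (c : V) : mono R -> V := fun n => if n == w then c else 0.

Definition sadd f g : mono R -> V := fun n => f n + g n.
Definition szero : mono R -> V := fun _ => 0.

Lemma shift_comp m1 u1 m2 u2 f :
  shift m1 u1 (shift m2 u2 f) = shift (m1 + m2) (madd u1 u2) f.
Proof.
apply: funext => n; rewrite /shift mle_madd msub_madd.
case: (mle u1 n) => //=; case: (mle u2 _); last by rewrite scaler0.
by rewrite scalerA Lpow_add.
Qed.

Lemma shift0 f : shift 0 (m0 R) f = f.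
Proof. by apply: funext => n; rewrite /shift mle0 msub0 Lpow0 scale1r. Qed.

Lemma shift_sadd m u f g : shift m u (sadd f g) = sadd (shift m u f) (shift m u g).
Proof. by apply: funext => n; rewrite /shift /sadd; case: ifP; rewrite ?scalerDr ?addr0. Qed.

Lemma shift_szero m u : shift m u szero = szero.
Proof. by apply: funext => n; rewrite /shift /szero; case: ifP; rewrite ?scaler0. Qed.

Lemma shift_sum (I : Type) (s : seq I) (F : I -> mono R -> V) m u :
  shift m u (fun n => \sum_(i <- s) F i n) = fun n => \sum_(i <- s) shift m u (F i) n.
Proof.
apply: funext => n; rewrite /shift; case: ifP => _; last by rewrite big1.
by rewrite scaler_sumr.
Qed.

Lemma shift_vanish m l v f n : v != m0 R -> (msize n < l)%N -> shift m (mscale l v) f n = 0.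
Proof.
move=> Hv Hl; rewrite /shift; case: ifP => // /(mle_scale_bound Hv) H.
by move: (leq_ltn_trans H Hl); rewrite ltnn.
Qed.

Lemma gm_bound m v f n B : v != m0 R -> (msize n < B)%N ->
  gm m v f n = \sum_(0 <= l < B) shift (m * l%:Z) (mscale l v) f n.
Proof.
move=> Hv HB; rewrite /gm (sum_ext0 (K := (msize n).+1) (B := B)) //.
by move=> l Hl; apply: shift_vanish.
Qed.

Lemma gm_sadd m v f g : gm m v (sadd f g) = sadd (gm m v f) (gm m v g).
Proof.
apply: funext => n; rewrite /gm /sadd -big_split /=; apply: eq_bigr => l _.
by rewrite shift_sadd.
Qed.

Lemma gm_szero m v : gm m v szero = szero.
Proof.
apply: funext => n; rewrite /gm big1 // => l _; by rewrite shift_szero.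
Qed.

Lemma gm_sum (I : Type) (s : seq I) (F : I -> mono R -> V) m v :
  gm m v (fun n => \sum_(i <- s) F i n) = fun n => \sum_(i <- s) gm m v (F i) n.
Proof.
apply: funext => n; rewrite /gm exchange_big /=; apply: eq_bigr => l _.
by rewrite shift_sum.
Qed.

Lemma shift_eval m u F n : shift m u F n = if mle u n then Lpow m *: F (msub n u) else 0.
Proof. by []. Qed.

Lemma shift_evalT m u F n : mle u n -> Lpow m *: F (msub n u) = shift m u F n.
Proof. by move=> H; rewrite shift_eval H. Qed.

Lemma shift_gm mu u m v f n B : v != m0 R -> (msize n < B)%N ->
  shift mu u (gm m v f) n = \sum_(0 <= l < B) shift mu u (shift (m * l%:Z) (mscale l v) f) n.
Proof.
move=> Hv HB; rewrite shift_eval; case: ifP => Hu; last by rewrite big1 // => l _; rewrite shift_eval Hu.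
rewrite (@gm_bound _ _ _ _ B Hv); last first.
  by apply: leq_ltn_trans HB; rewrite msize_msub // leq_subr.
by rewrite scaler_sumr; apply: eq_bigr => l _; rewrite [RHS]shift_eval Hu.
Qed.

Lemma gm_gm_expand m1 v1 m2 v2 f n B : v1 != m0 R -> v2 != m0 R -> (msize n < B)%N ->
  gm m1 v1 (gm m2 v2 f) n = \sum_(0 <= l1 < B) \sum_(0 <= l2 < B)
     shift (m1 * l1%:Z + m2 * l2%:Z) (madd (mscale l1 v1) (mscale l2 v2)) f n.
Proof.
move=> H1 H2 HB; rewrite (gm_bound _ _ H1 HB); apply: eq_bigr => l1 _.
by rewrite (shift_gm _ _ _ _ H2 HB); apply: eq_bigr => l2 _; rewrite shift_comp.
Qed.

Lemma gm_comm m1 v1 m2 v2 f : v1 != m0 R -> v2 != m0 R ->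
  gm m1 v1 (gm m2 v2 f) = gm m2 v2 (gm m1 v1 f).
Proof.
move=> H1 H2; apply: funext => n.
rewrite (gm_gm_expand _ _ _ H1 H2 (ltnSn _)) (gm_gm_expand _ _ _ H2 H1 (ltnSn _)).
rewrite exchange_big /=; apply: eq_bigr => l1 _; apply: eq_bigr => l2 _.
by rewrite addrC maddC.
Qed.

Lemma gm_shift m v mu u f : v != m0 R -> gm m v (shift mu u f) = shift mu u (gm m v f).
Proof.
move=> Hv; apply: funext => n.
rewrite (shift_gm _ _ _ _ Hv (ltnSn _)) /gm; apply: eq_bigr => l _.
by rewrite !shift_comp addrC maddC.
Qed.

Lemma shift_mon mu u w c : shift mu u (mon w c) = mon (madd w u) (Lpow mu *: c).
Proof.
apply: funext => n; rewrite /shift /mon; case: ifP => Hu.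
  case: (eqVneq (msub n u) w) => [<-|Hne]; first by rewrite msubK // eqxx.
  rewrite scaler0; case: eqP => // E; case/eqP: Hne; by rewrite E maddK.
case: eqP => // E; move: Hu; by rewrite E mle_maddr.
Qed.

Definition gfold (s : seq (int * mono R)) f := foldr (fun (p : int * mono R) acc => gm p.1 p.2 acc) f s.
Definition cone s w c := gfold s (mon w c).
Definition gnz (s : seq (int * mono R)) := all (fun p : int * mono R => p.2 != m0 R) s.

Lemma gfold_shift s mu u f : gnz s -> shift mu u (gfold s f) = gfold s (shift mu u f).
Proof.
elim: s => //= y s IH /andP[Hy Hs]; by rewrite -IH // gm_shift.
Qed.

Lemma shift_cone s mu u w c : gnz s ->
  shift mu u (cone s w c) = cone s (madd w u) (Lpow mu *: c).
Proof. by move=> Hs; rewrite /cone gfold_shift // shift_mon. Qed.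

Lemma gfold_sadd s f g : gfold s (sadd f g) = sadd (gfold s f) (gfold s g).
Proof. by elim: s => //= x s ->; rewrite gm_sadd. Qed.

Lemma gfold_szero s : gfold s szero = szero.
Proof. by elim: s => //= x s ->; rewrite gm_szero. Qed.

Lemma gfold_sum (I : Type) (r : seq I) (F : I -> mono R -> V) s :
  gfold s (fun n => \sum_(i <- r) F i n) = fun n => \sum_(i <- r) gfold s (F i) n.
Proof. by elim: s => //= x s ->; rewrite gm_sum. Qed.

Lemma gfold_rem s x f : gnz s -> x \in s -> gfold s f = gm x.1 x.2 (gfold (rem x s) f).
Proof.
elim: s => //= y s IH /andP[Hy Hs]; rewrite in_cons.
case: (eqVneq y x) => [->|Hne] //= Hx.
rewrite IH // gm_comm //; first by move: Hs => /allP; apply.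
Qed.

End Ser.

Section Ser2.
Variable R : nat.
Variable V : lmodType Zloc.
Implicit Types u v n w : mono R.
Implicit Types f g : mono R -> V.

Lemma shift_vanish2 m l1 v1 l2 v2 f n : v1 != m0 R -> v2 != m0 R ->
  (msize n < l1)%N || (msize n < l2)%N ->
  shift m (madd (mscale l1 v1) (mscale l2 v2)) f n = 0.
Proof.
move=> H1 H2 Hl; rewrite shift_eval mle_madd; case: ifP => // /andP[A B].
have := mle_scale_bound H1 A; have := mle_scale_bound H2 B.
rewrite msize_msub // => Ha Hb; move: Hl; lia.
Qed.

Lemma gm_mod m v f q : v != m0 R -> (0 < q)%N ->
  gm m v f = fun n => \sum_(0 <= r < q) shift (m * r%:Z) (mscale r v)
                          (gm (m * q%:Z) (mscale q v) f) n.
Proof.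
move=> Hv Hq; have Hqv : mscale q v != m0 R.
  apply: contraNneq Hv => /ffunP E; apply/eqP/ffunP => i.
  have := E i; rewrite !ffunE => /eqP; rewrite muln_eq0 (negbTE (lt0n_neq0 Hq)) /= => /eqP ->.
  by [].
apply: funext => n; rewrite /gm (@modsum _ (fun l => shift (m * l%:Z) (mscale l v) f n) q _ Hq); last by move=> l Hl; apply: shift_vanish.
apply: eq_bigr => r _; rewrite (shift_gm _ _ _ _ Hqv (ltnSn _)); apply: eq_bigr => k _.
rewrite shift_comp; congr (shift _ _ _ _).
  lia.
by rewrite mscaleD -mscaleM maddC mulnC.
Qed.

Lemma gm_pair m1 v1 m2 v2 f : v1 != m0 R -> v2 != m0 R ->
  gm m1 v1 (gm m2 v2 f) =
  sadd (gm (m1 + m2) (madd v1 v2) (gm m1 v1 f))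
       (shift m2 v2 (gm (m1 + m2) (madd v1 v2) (gm m2 v2 f))).
Proof.
move=> H1 H2; have H12 : madd v1 v2 != m0 R.
  apply: contraNneq H1 => /ffunP E; apply/eqP/ffunP => i.
  by have := E i; rewrite !ffunE => /eqP; rewrite addn_eq0 => /andP[/eqP ->].
apply: funext => n; rewrite /sadd.
rewrite (gm_gm_expand _ _ _ H1 H2 (ltnSn _)) (@pairsum _ (fun l1 l2 => shift (m1 * l1%:Z + m2 * l2%:Z) (madd (mscale l1 v1) (mscale l2 v2)) f n)); last first.
  by move=> l1 l2 Hl; apply: shift_vanish2.
congr (_ + _).
  rewrite (gm_gm_expand _ _ _ H12 H1 (ltnSn _)); apply: eq_bigr => k _; apply: eq_bigr => u _.
  congr (shift _ _ _ _); first lia.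
  by apply/ffunP => i; rewrite !ffunE; ring.
rewrite (shift_gm _ _ _ _ H12 (ltnSn _)); apply: eq_bigr => k _.
rewrite shift_comp.
have Hm : (msize (msub n (madd v2 (mscale k (madd v1 v2)))) < (msize n).+1)%N.
  by rewrite ltnS; apply: leq_sum => i _; rewrite ffunE leq_subr.
rewrite shift_eval; case: ifP => Hc.
  rewrite (gm_bound _ _ H2 Hm) scaler_sumr; apply: eq_bigr => u _.
  rewrite (shift_evalT _ _ Hc) shift_comp; congr (shift _ _ _ _); first lia.
  by apply/ffunP => i; rewrite !ffunE; ring.
rewrite big1 // => u _.
have -> : madd (mscale k v1) (mscale (k + 1 + u) v2) =
   madd (madd v2 (mscale k (madd v1 v2))) (mscale u v2).
  by apply/ffunP => i; rewrite !ffunE; ring.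
by rewrite shift_eval mle_madd Hc.
Qed.
End Ser2.

Section Ser3.
Variable R : nat.
Variable V : lmodType Zloc.
Implicit Types u v n w : mono R.
Implicit Types f g : mono R -> V.

Definition Dop m v f : mono R -> V := fun n => f n - shift m v f n.

Lemma gm_Dop m v f : v != m0 R -> gm m v (Dop m v f) = f.
Proof.
move=> Hv; apply: funext => n; rewrite /gm.
pose u := fun l : nat => shift (m * l%:Z) (mscale l v) f n.
have E : forall l, shift (m * l%:Z) (mscale l v) (Dop m v f) n = u l - u l.+1.
  move=> l; rewrite /Dop [LHS]shift_eval /u.
  have Hs : mscale l.+1 v = madd (mscale l v) v.
    by apply/ffunP => i; rewrite !ffunE mulSn addnC.
  case: ifP => H.
    rewrite Hs (_ : m * l.+1%:Z = m * l%:Z + m); last lia.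
    by rewrite -shift_comp !shift_eval H scalerBr.
  by rewrite !shift_eval Hs mle_madd H /= subrr.
rewrite (eq_bigr _ (fun l _ => E l)).
have := @telescope_sumr _ 0 (msize n).+1 (fun l => - u l) (leq0n _).
rewrite /= => T.
rewrite (eq_bigr (fun l => - u l.+1 - - u l)); last by move=> l _; rewrite opprK addrC.
by rewrite T opprK /u shift_vanish // oppr0 add0r mulr0 mscale0 shift0.
Qed.

Lemma Dop_poly m v f : is_poly 0 f -> is_poly 0 (Dop m v f).
Proof.
move=> [S HS]; exists (S ++ map (fun x => madd x v) S) => n.
rewrite mem_cat negb_or => /andP[H1 H2]; rewrite /Dop HS // shift_eval.
case: ifP => H; last by rewrite subrr.
rewrite HS ?scaler0 ?subrr //; apply: contra H2 => H3.
by apply/mapP; exists (msub n v) => //; rewrite msubK.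
Qed.

End Ser3.

Section SmulGeom.
Variable R : nat.
Variable V : lmodType Zloc.

Lemma geom_nat m v (e : mono R) B : v != m0 R -> (msize e < B)%N ->
  geom m v e = \sum_(0 <= l < B) if e == mscale l v then Lpow (m * l%:Z) else 0.
Proof.
move=> Hv HB; rewrite /geom -(big_mkord (fun l => e == mscale l v) (fun l => Lpow (m * l%:Z))) big_mkcond /=.
rewrite [RHS](sum_ext0 (K := (msize e).+1)) //.
move=> l Hl; case: eqP => // E.
have := @mle_scale_bound R l v e Hv; rewrite -E => H.
have : (l <= msize e)%N by apply: H; apply/mleP.
by rewrite leqNgt Hl.
Qed.

Lemma smul_geom m v (f : mono R -> V) : v != m0 R -> smul (geom m v) f = gm m v f.
Proof.
move=> Hv; apply: funext => n; rewrite /smul /gm.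
set B := (msize n).+1.
pose ea (a : {ffun 'I_R -> 'I_B}) : mono R := [ffun i => nat_of_ord (a i)].
have Ea : forall a : {ffun 'I_R -> 'I_B}, [forall i, a i <= n i]%N -> mle (ea a) n.
  by move=> a /forallP H; apply/mleP => i; rewrite ffunE.
rewrite (eq_bigr (fun a => \sum_(0 <= l < B)
   (if ea a == mscale l v then Lpow (m * l%:Z) *: f (msub n (mscale l v)) else 0))); last first.
  move=> a Ha; rewrite (@geom_nat m v (ea a) B Hv); last by rewrite ltnS msize_mle // Ea.
  rewrite scaler_suml; apply: eq_bigr => l _; case: eqP => E; last by rewrite scale0r.
  congr (_ *: f _); apply/ffunP => i; rewrite !ffunE.
  by move/ffunP: E => /(_ i); rewrite !ffunE => <-.
rewrite exchange_big /=; apply: eq_bigr => l _; rewrite shift_eval.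
case: ifP => H.
  have Hle : forall i, (mscale l v i < B)%N.
    move=> i; rewrite ltnS; apply: (leq_trans _ (coord_le_msize n i)).
    by move/mleP: H; apply.
  pose a0 : {ffun 'I_R -> 'I_B} := [ffun i => inord (mscale l v i)].
  have Ha0 : ea a0 = mscale l v.
    by apply/ffunP => i; rewrite ffunE ffunE inordK.
  rewrite -big_mkcondr /= (big_pred1 a0) ?Ha0 ?eqxx //.
  move=> a /=; apply/andP/eqP => [[_ /eqP E]|->]; last first.
    split; last by rewrite Ha0.
    apply/forallP => i; rewrite ffunE inordK //.
    by move/mleP: H; apply.
  apply/ffunP => i; apply: val_inj; move/ffunP: E => /(_ i).
  have Eai : ea a i = a i by rewrite ffunE.
  have Ea0 : nat_of_ord (a0 i) = mscale l v i by rewrite ffunE inordK.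
  rewrite Eai => E1; change (nat_of_ord (a i) = nat_of_ord (a0 i)).
  by rewrite E1 Ea0.
rewrite big1 // => a Ha; case: eqP => // E.
by move: H; rewrite -E Ea.
Qed.

End SmulGeom.

Section Rat.
Variable R : nat.
Variable V : lmodType Zloc.
Variable allowed : int -> bool.
Implicit Types f g p : mono R -> V.
Implicit Types s : seq (int * mono R).

Lemma foldr_smul_gfold s p : gnz s ->
  foldr (fun mn acc => smul (geom mn.1 mn.2) acc) p s = gfold s p.
Proof.
elim: s => //= x s IH /andP[Hx Hs]; by rewrite IH // smul_geom.
Qed.

Lemma gfold_perm s s' f : gnz s -> perm_eq s s' -> gfold s f = gfold s' f.
Proof.
elim: s s' => [|x t IH] s' Hs Hp.
  by rewrite perm_sym in Hp; move/perm_nilP: Hp => ->.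
have Hs' : gnz s' by rewrite /gnz -(perm_all _ Hp).
have Hx : x \in s' by rewrite -(perm_mem Hp) mem_head.
rewrite (gfold_rem _ Hs' Hx) /=; congr (gm _ _ _).
move: Hs => /andP[_ Ht]; apply: IH => //.
by rewrite -(perm_cons x); apply: perm_trans Hp (perm_to_rem Hx).
Qed.

Definition Dl s p := foldl (fun acc (x : int * mono R) => Dop x.1 x.2 acc) p s.

Lemma gfold_Dl s p : gnz s -> gfold s (Dl s p) = p.
Proof.
elim: s p => //= x s IH p /andP[Hx Hs]; by rewrite IH // gm_Dop.
Qed.

Lemma Dl_poly s p : is_poly 0 p -> is_poly 0 (Dl s p).
Proof. elim: s p => //= x s IH p Hp; apply: IH; exact: Dop_poly. Qed.

Lemma sadd_poly p q : is_poly 0 p -> is_poly 0 q -> is_poly 0 (sadd p q).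
Proof.
move=> [S1 H1] [S2 H2]; exists (S1 ++ S2) => n; rewrite mem_cat negb_or => /andP[A B].
by rewrite /sadd H1 // H2 // addr0.
Qed.

Definition rat_ok s := all (fun mn : int * mono R => allowed mn.1 && (mn.2 != m0 R)) s.

Lemma rat_ok_gnz s : rat_ok s -> gnz s.
Proof. by move/allP => H; apply/allP => x /H /andP[]. Qed.

Lemma ratserE f : ratser allowed f <->
  exists p s, is_poly 0 p /\ rat_ok s /\ f = gfold s p.
Proof.
have Hz : forall x : mono R, (x != 0) = (x != m0 R).
  by move=> x; congr (~~ (_ == _)); apply/ffunP => i; rewrite !ffunE.
split.
  move=> [p [s [Hp [Hs Hf]]]]; exists p, s; split => //.
  have Hs' : rat_ok s.
    by apply/allP => x /(allP Hs) /andP[-> /=]; rewrite Hz.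
  split => //; apply: funext => n; by rewrite Hf foldr_smul_gfold // rat_ok_gnz.
move=> [p [s [Hp [Hs ->]]]]; exists p, s; split => //; split.
  by apply/allP => x /(allP Hs) /andP[-> /=]; rewrite Hz.
by move=> n; rewrite foldr_smul_gfold // rat_ok_gnz.
Qed.

Lemma ratser_add f g : ratser allowed f -> ratser allowed g -> ratser allowed (sadd f g).
Proof.
move=> /ratserE [p1 [s1 [Hp1 [Hs1 ->]]]] /ratserE [p2 [s2 [Hp2 [Hs2 ->]]]].
apply/ratserE; exists (sadd (Dl s2 p1) (Dl s1 p2)), (s1 ++ s2); split.
  by apply: sadd_poly; apply: Dl_poly.
have H12 : rat_ok (s1 ++ s2) by rewrite /rat_ok all_cat; apply/andP.
split => //.
have G1 := rat_ok_gnz Hs1; have G2 := rat_ok_gnz Hs2.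
rewrite gfold_sadd; congr sadd.
  by rewrite /gfold foldr_cat -/(gfold s2 _) gfold_Dl.
rewrite (gfold_perm (s := s1 ++ s2) (s' := s2 ++ s1)); last by rewrite perm_catC.
  by rewrite /gfold foldr_cat -/(gfold s1 _) gfold_Dl.
by rewrite /gnz all_cat; apply/andP.
Qed.

Lemma ratser_zero : ratser allowed (@szero R V).
Proof.
apply/ratserE; exists (@szero R V), [::]; split; last by [].
by exists [::] => n.
Qed.

Lemma ratser_cone s w (c : V) : rat_ok s -> ratser allowed (cone s w c).
Proof.
move=> Hs; apply/ratserE; exists (mon w c), s; split => //.
by exists [:: w] => n; rewrite inE /mon => /negbTE ->.
Qed.

Lemma ratser_sum (I : Type) (r : seq I) (F : I -> mono R -> V) :
  (forall i, ratser allowed (F i)) -> ratser allowed (fun n => \sum_(i <- r) F i n).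
Proof.
move=> H; elim: r => [|i r IH].
  have -> : (fun n : mono R => \sum_(i <- [::]) F i n) = @szero R V by apply: funext => n; rewrite big_nil.
  exact: ratser_zero.
have -> : (fun n => \sum_(j <- i :: r) F j n) = sadd (F i) (fun n => \sum_(j <- r) F j n).
  by apply: funext => n; rewrite big_cons.
exact: ratser_add.
Qed.

End Rat.

Section Lin.
Variables (U W : lmodType Zloc) (f : U -> W).
Hypothesis Hf : zlinear f.

Lemma zlin0 : f 0 = 0.
Proof.
have H := Hf 1 0 0; rewrite !scale1r addr0 in H.
by have := congr1 (fun x => x - f 0) H; rewrite /= subrr addrK.
Qed.
Lemma zlinD x y : f (x + y) = f x + f y.
Proof. by have := Hf 1 x y; rewrite !scale1r. Qed.
Lemma zlinZ a x : f (a *: x) = a *: f x.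
Proof. by have := Hf a x 0; rewrite !addr0 zlin0 addr0. Qed.
Lemma zlin_sum (I : Type) (s : seq I) (F : I -> U) :
  f (\sum_(i <- s) F i) = \sum_(i <- s) f (F i).
Proof.
elim: s => [|i s IH]; first by rewrite !big_nil zlin0.
by rewrite !big_cons zlinD IH.
Qed.
End Lin.

Section Ext.
Variable r : nat.

Definition pr (a b : mono r) : mono (r + r) :=
  [ffun i => match split i with inl j => a j | inr j => b j end].

Lemma pr_l a b j : pr a b (lshift r j) = a j.
Proof. by rewrite ffunE (unsplitK (inl _ j)). Qed.
Lemma pr_r a b j : pr a b (rshift r j) = b j.
Proof. by rewrite ffunE (unsplitK (inr _ j)). Qed.

Lemma pr_eq a b c d : (pr a b == pr c d) = (a == c) && (b == d).
Proof.
apply/eqP/andP => [E|[/eqP -> /eqP ->]] //; split; apply/eqP/ffunP => j.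
  by rewrite -(pr_l a b) E pr_l.
by rewrite -(pr_r a b) E pr_r.
Qed.

Lemma madd_pr a b c d : madd (pr a b) (pr c d) = pr (madd a c) (madd b d).
Proof. by apply/ffunP => i; rewrite !ffunE; case: (split i) => j; rewrite ffunE. Qed.
Lemma msub_pr a b c d : msub (pr a b) (pr c d) = pr (msub a c) (msub b d).
Proof. by apply/ffunP => i; rewrite !ffunE; case: (split i) => j; rewrite ffunE. Qed.
Lemma mscale_pr l a b : mscale l (pr a b) = pr (mscale l a) (mscale l b).
Proof. by apply/ffunP => i; rewrite !ffunE; case: (split i) => j; rewrite ffunE. Qed.
Lemma mle_pr a b c d : mle (pr a b) (pr c d) = mle a c && mle b d.
Proof.
apply/mleP/andP => [H|[/mleP H1 /mleP H2] i].
  by split; apply/mleP => j; [have := H (lshift r j) | have := H (rshift r j)];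
     rewrite ?pr_l ?pr_r.
by rewrite !ffunE; case: (split i) => j.
Qed.
Lemma msize_pr a b : msize (pr a b) = (msize a + msize b)%N.
Proof. by rewrite /msize big_split_ord /=; congr (_ + _)%N; apply: eq_bigr => j _; rewrite ?pr_l ?pr_r. Qed.
Lemma mscale_m0 l : mscale l (m0 r) = m0 r.
Proof. by apply/ffunP => i; rewrite !ffunE muln0. Qed.
Lemma pr_nz a b : (a != m0 r) || (b != m0 r) -> pr a b != m0 (r + r).
Proof.
case/orP => H; apply: contraNneq H => /ffunP E; apply/eqP/ffunP => j; rewrite ffunE.
  by have := E (lshift r j); rewrite pr_l ffunE.
by have := E (rshift r j); rewrite pr_r ffunE.
Qed.

Definition liftL (g : int * mono r) := (g.1, pr g.2 (m0 r)).
Definition liftR (g : int * mono r) := (g.1, pr (m0 r) g.2).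

Variables (M N P : lmodType Zloc) (t : M -> N -> P).
Hypothesis Ht : zbilinear t.

Lemma tl0 y : t 0 y = 0. Proof. exact: (zlin0 (Ht.1 y)). Qed.
Lemma tr0 x : t x 0 = 0. Proof. exact: (zlin0 (Ht.2 x)). Qed.
Lemma tlZ a x y : t (a *: x) y = a *: t x y. Proof. exact: (zlinZ (Ht.1 y)). Qed.
Lemma trZ a x y : t x (a *: y) = a *: t x y. Proof. exact: (zlinZ (Ht.2 x)). Qed.
Lemma tlsum (I : Type) (s : seq I) F y : t (\sum_(i <- s) F i) y = \sum_(i <- s) t (F i) y.
Proof. exact: (zlin_sum (Ht.1 y)). Qed.
Lemma trsum (I : Type) (s : seq I) x F : t x (\sum_(i <- s) F i) = \sum_(i <- s) t x (F i).
Proof. exact: (zlin_sum (Ht.2 x)). Qed.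

Lemma had_base wA (cA : M) wB (cB : N) n n' :
  t (mon wA cA n) (mon wB cB n') = mon (pr wA wB) (t cA cB) (pr n n').
Proof.
rewrite /mon pr_eq; case: (n == wA); case: (n' == wB); by rewrite ?tl0 ?tr0.
Qed.

Lemma had_B sB wA (cA : M) wB (cB : N) n n' : gnz sB ->
  t (mon wA cA n) (gfold sB (mon wB cB) n') =
  gfold (map liftR sB) (mon (pr wA wB) (t cA cB)) (pr n n').
Proof.
elim: sB n' => [|g sB IH] n' /=; first by rewrite had_base.
move=> /andP[Hg Hs].
have Hg' : (liftR g).2 != m0 (r + r) by rewrite pr_nz // Hg orbT.
set B := (msize n + msize n').+1.
rewrite (gm_bound _ _ Hg (B := B)); last by rewrite ltnS leq_addl.
rewrite (gm_bound _ _ Hg' (B := B)); last by rewrite msize_pr.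
rewrite trsum; apply: eq_bigr => l _.
rewrite !shift_eval /= mscale_pr mscale_m0 mle_pr mle0 /=.
case: ifP => H; last by rewrite tr0.
by rewrite trZ msub_pr msub0 IH.
Qed.

Lemma had sA sB wA (cA : M) wB (cB : N) n n' : gnz sA -> gnz sB ->
  t (gfold sA (mon wA cA) n) (gfold sB (mon wB cB) n') =
  gfold (map liftL sA ++ map liftR sB) (mon (pr wA wB) (t cA cB)) (pr n n').
Proof.
move=> HA HB; elim: sA n HA => [|g sA IH] n /=; first by move=> _; rewrite had_B.
move=> /andP[Hg Hs].
have Hg' : (liftL g).2 != m0 (r + r) by rewrite pr_nz // Hg.
set B := (msize n + msize n').+1.
rewrite (gm_bound _ _ Hg (B := B)); last by rewrite ltnS leq_addr.
rewrite (gm_bound _ _ Hg' (B := B)); last by rewrite msize_pr.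
rewrite tlsum; apply: eq_bigr => l _.
rewrite !shift_eval /= mscale_pr mscale_m0 mle_pr mle0 andbT.
case: ifP => H; last by rewrite tl0.
by rewrite tlZ msub_pr msub0 IH.
Qed.

End Ext.

Section Elim.
Variable R : nat.
Variable V : lmodType Zloc.
Variable gok : int * mono R -> bool.
Hypothesis gok_nz : forall g, gok g -> g.2 != m0 R.
Implicit Types (K : mono R -> bool) (F G : mono R -> V).

Definition cd := (seq (int * mono R) * mono R * V)%type.
Definition cv (d : cd) := cone d.1.1 d.1.2 d.2.

Definition Good (K : mono R -> bool) (F : mono R -> V) : Prop :=
  exists L : seq cd, all (fun d : cd => all gok d.1.1 && all (fun g => K g.2) d.1.1) L /\
    forall N, K N -> F N = \sum_(d <- L) cv d N.

Lemma gok_gnz s : all gok s -> gnz s.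
Proof. by move/allP => H; apply/allP => g /H /gok_nz. Qed.

Lemma Good_ext K F G : (forall N, K N -> F N = G N) -> Good K G -> Good K F.
Proof. move=> E [L [HL HG]]; exists L; split => // N HN; by rewrite E // HG. Qed.

Lemma Good_add K F G : Good K F -> Good K G -> Good K (sadd F G).
Proof.
move=> [L1 [H1 E1]] [L2 [H2 E2]]; exists (L1 ++ L2); split.
  by rewrite all_cat H1 H2.
by move=> N HN; rewrite /sadd big_cat /= E1 // E2.
Qed.

Lemma Good_zero K : Good K (@szero R V).
Proof. by exists [::]; split => // N _; rewrite big_nil. Qed.

Lemma Good_sum (I : eqType) (s : seq I) K (F : I -> mono R -> V) :
  (forall i, i \in s -> Good K (F i)) -> Good K (fun N => \sum_(i <- s) F i N).
Proof.
elim: s => [|i s IH] H.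
  by apply: (Good_ext _ (Good_zero K)) => N _; rewrite big_nil.
apply: (Good_ext (G := sadd (F i) (fun N => \sum_(j <- s) F j N))).
  by move=> N _; rewrite big_cons.
apply: Good_add; first by apply: H; rewrite mem_head.
by apply: IH => j Hj; apply: H; rewrite inE Hj orbT.
Qed.

Lemma Good_cone K s w c : all gok s -> all (fun g => K g.2) s -> Good K (cone s w c).
Proof.
move=> H1 H2; exists [:: (s, w, c)]; split; first by rewrite /= H1 H2.
by move=> N _; rewrite big_seq1.
Qed.

Lemma all_rem (T : eqType) (p : pred T) x (s : seq T) : all p s -> all p (rem x s).
Proof. by move/allP => H; apply/allP => y /mem_rem /H. Qed.

Lemma count_rem1 (T : eqType) (p : pred T) x (s : seq T) : x \in s ->
  count p s = (p x + count p (rem x s))%N.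
Proof. by move/perm_to_rem/permP => /(_ p) ->. Qed.

Variable psi : mono R -> int.
Hypothesis psi_add : forall x y, psi (madd x y) = psi x + psi y.

Lemma psi0 : psi (m0 R) = 0.
Proof.
have H := psi_add (m0 R) (m0 R); rewrite madd0 in H.
by have := congr1 (fun x => x - psi (m0 R)) H; rewrite /= subrr addrK.
Qed.

Lemma psi_sub n u : mle u n -> psi (msub n u) = psi n - psi u.
Proof. by move=> H; rewrite -{2}(msubK H) psi_add addrK. Qed.

Lemma psi_scale l v : psi (mscale l v) = l%:Z * psi v.
Proof.
elim: l => [|l IH]; first by rewrite mscale0 psi0 mul0r.
have -> : mscale l.+1 v = madd v (mscale l v) by apply/ffunP => i; rewrite !ffunE mulSn.
by rewrite psi_add IH -addn1 PoszD mulrDl mul1r addrC.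
Qed.

Lemma support s w (c : V) X : gnz s -> all (fun g => 0 <= psi g.2) s ->
  psi X < psi w -> cone s w c X = 0.
Proof.
elim: s X => [|g s IH] X /=; first by move=> _ _ H; rewrite /cone /= /mon; case: eqP => // E; move: H; rewrite E ltxx.
move=> /andP[Hg Hs] /andP[Hp Hps] HX; rewrite /gm big1 // => l _.
rewrite shift_eval; case: ifP => // H.
rewrite IH ?scaler0 // psi_sub // psi_scale.
apply: le_lt_trans HX; rewrite lerBlDr lerDl; apply: mulr_ge0 => //.
Qed.

Lemma part2_aux k K s w (c : V) : (count (fun g => psi g.2 != 0) s <= k)%N ->
  all gok s -> all (fun g => K g.2) s -> all (fun g => 0 <= psi g.2) s ->
  Good (fun x => (psi x == 0) && K x) (cone s w c).
Proof.
elim: k s w c => [|k IH] s w c Hk H1 H2 H3.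
  apply: Good_cone => //; apply/allP => g Hg; rewrite (allP H2) // andbT.
  have Hn : ~~ has (fun g => psi g.2 != 0) s by rewrite has_count -leqNgt.
  by move/hasPn: Hn => /(_ g Hg); rewrite negbK.
case: (boolP (has (fun g => psi g.2 != 0) s)) => Hh; last first.
  apply: Good_cone => //; apply/allP => g Hg; rewrite (allP H2) // andbT.
  by move/hasPn: Hh => /(_ g Hg); rewrite negbK.
move/hasP: Hh => [g Hg Hg0].
have Gs := gok_gnz H1.
have Hv := gok_nz (allP H1 g Hg).
have Hpos : 0 < psi g.2 by rewrite lt_def Hg0 (allP H3 g Hg).
pose K0 := (absz (psi w)).+1.
apply: (Good_ext (G := fun N => \sum_(0 <= l < K0)
           cone (rem g s) (madd w (mscale l g.2)) (Lpow (g.1 * l%:Z) *: c) N)).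
  move=> N /andP[/eqP HN _].
  rewrite /cone (gfold_rem _ Gs Hg) -/(cone (rem g s) w c) /gm.
  rewrite (@sum_ext0' _ (fun l => shift (g.1 * l%:Z) (mscale l g.2) (cone (rem g s) w c) N) K0).
  - apply: eq_bigr => l _; by rewrite shift_cone // ?gok_gnz ?all_rem.
  - move=> l Hl; rewrite shift_eval; case: ifP => // Hle.
    rewrite support ?scaler0 //; first by apply: all_rem.
      by apply: all_rem.
    rewrite psi_sub // psi_scale HN sub0r.
    move: Hl Hpos; rewrite /K0; move: (psi w) (psi g.2) => x y; nia.
  - by move=> l Hl; apply: shift_vanish.
apply: Good_sum => l _; apply: IH.
- move: Hk; rewrite (count_rem1 _ Hg) /= Hg0 add1n ltnS //.
- exact: all_rem.
- exact: all_rem.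
- exact: all_rem.
Qed.

End Elim.

Section Elim2.
Variable R : nat.
Variable V : lmodType Zloc.
Variable gok : int * mono R -> bool.
Hypothesis gok_nz : forall g, gok g -> g.2 != m0 R.
Variable psi : mono R -> int.
Hypothesis psi_add : forall x y, psi (madd x y) = psi x + psi y.
Variable K : mono R -> bool.
Hypothesis K_add : forall x y, K x -> K y -> K (madd x y).
Hypothesis K_scale : forall q x, K x -> K (mscale q x).
Hypothesis gok_scale : forall g q, gok g -> (0 < q)%N -> gok (g.1 * q%:Z, mscale q g.2).
Hypothesis gok_comb : forall g1 g2, gok g1 -> gok g2 -> psi g1.2 < 0 -> 0 < psi g2.2 ->
  gok (g1.1 + g2.1, madd g1.2 g2.2).

Lemma part_else s w (c : V) : all gok s -> all (fun g => K g.2) s ->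
  ~~ (has (fun g => 0 < psi g.2) s && has (fun g => psi g.2 < 0) s) ->
  Good gok (fun x => (psi x == 0) && K x) (cone s w c).
Proof.
move=> H1 H2; rewrite negb_and => /orP[] Hn.
  have H3 : all (fun g => 0 <= - psi g.2) s.
    by apply/allP => g Hg; move/hasPn: Hn => /(_ g Hg); rewrite oppr_ge0 -leNgt.
  have Hadd : forall x y, - psi (madd x y) = - psi x + - psi y by move=> x y; rewrite psi_add opprD.
  have := @part2_aux R V gok gok_nz (fun x => - psi x) Hadd _ K s w c (leqnn _) H1 H2 H3.
  have -> : (fun x => (- psi x == 0) && K x) = (fun x => (psi x == 0) && K x).
    by apply: funext => x; rewrite oppr_eq0.
  by [].
have H3 : all (fun g => 0 <= psi g.2) s.
  by apply/allP => g Hg; move/hasPn: Hn => /(_ g Hg); rewrite -leNgt.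
exact: (@part2_aux R V gok gok_nz psi psi_add _ K s w c (leqnn _) H1 H2 H3).
Qed.

Lemma gm_gm_cone (g1 g2 : int * mono R) s w (c : V) :
  gm g1.1 g1.2 (gm g2.1 g2.2 (cone s w c)) = cone (g1 :: g2 :: s) w c.
Proof. by []. Qed.

Lemma part1_aux k s w (c : V) : (count (fun g => psi g.2 != 0) s <= k)%N ->
  all gok s -> all (fun g => K g.2) s ->
  Good gok (fun x => (psi x == 0) && K x) (cone s w c).
Proof.
elim: k s w c => [|k IH] s w c Hk H1 H2.
  apply: part_else => //; apply: contraTN Hk => /andP[/hasP [g Hg Hp] _].
  by rewrite -ltnNge (count_rem1 _ Hg) /= gt_eqF.
case: (boolP (has (fun g => 0 < psi g.2) s && has (fun g => psi g.2 < 0) s)) => Hb;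
  last by apply: part_else.
move/andP: Hb => [/hasP [i Hi Hip] /hasP [j Hj Hjn]].
have Hij : j != i by apply: contraTneq Hjn => ->; rewrite -leNgt ltW.
have Hj' : j \in rem i s by apply: rem_mem.
have Gs := gok_gnz gok_nz H1.
have Gi := allP H1 i Hi; have Gj := allP H1 j Hj.
have Hvi := gok_nz Gi; have Hvj := gok_nz Gj.
have Ki := allP H2 i Hi; have Kj := allP H2 j Hj.
set a := absz (psi i.2); set b := absz (psi j.2).
have Ea : psi i.2 = a%:Z by rewrite /a gtz0_abs.
have Eb : psi j.2 = - b%:Z by rewrite /b ltz0_abs // opprK.
have Ha : (0 < a)%N by rewrite /a absz_gt0 gt_eqF.
have Hb : (0 < b)%N by rewrite /b absz_gt0 lt_eqF.
set s'' := rem j (rem i s).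
have Gs'' : gnz s'' by apply: all_rem; apply: all_rem.
have Hc : count (fun g => psi g.2 != 0) s = (count (fun g => psi g.2 != 0) s'').+2.
  by rewrite (count_rem1 _ Hi) (count_rem1 _ Hj') /= gt_eqF // lt_eqF.
set bi := (i.1 * b%:Z, mscale b i.2).
set aj := (j.1 * a%:Z, mscale a j.2).
have Gbi : gok bi by apply: gok_scale.
have Gaj : gok aj by apply: gok_scale.
have Hbi := gok_nz Gbi; have Haj := gok_nz Gaj.
have Pbi : psi bi.2 = (a * b)%N%:Z by rewrite /bi /= psi_scale // Ea PoszM mulrC.
have Paj : psi aj.2 = - (a * b)%N%:Z by rewrite /aj /= psi_scale // Eb PoszM mulrN.
set h := (aj.1 + bi.1, madd aj.2 bi.2).
have Hab : (0 < a * b)%N by rewrite muln_gt0 Ha Hb.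
have Gh : gok h.
  by apply: gok_comb => //; rewrite ?Paj ?Pbi ?oppr_lt0 ltz_nat.
have Ph : psi h.2 = 0 by rewrite /h /= psi_add Paj Pbi addNr.
have Kbi : K bi.2 by exact: K_scale.
have Kaj : K aj.2 by exact: K_scale.
have Kh : K h.2 by exact: K_add.
have Hs1 : all gok s'' by apply: all_rem; apply: all_rem.
have Hs2 : all (fun g => K g.2) s'' by apply: all_rem; apply: all_rem.
have E : cone s w c = gm i.1 i.2 (gm j.1 j.2 (cone s'' w c)).
  by rewrite /cone (gfold_rem _ Gs Hi) (gfold_rem _ (all_rem _ Gs) Hj').
rewrite E (gm_mod _ _ Hvi Hb) (gm_comm _ _ _ Hbi Hvj) (gm_mod _ _ Hvj Ha).
have Hbi' : mscale b i.2 != m0 R by [].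
have Haj' : mscale a j.2 != m0 R by [].
rewrite (gm_pair (j.1 * a%:Z) (i.1 * b%:Z) _ Haj' Hbi').
apply: Good_sum => rho _; rewrite shift_sum.
apply: Good_sum => sig _; rewrite shift_comp shift_sadd shift_comp.
apply: Good_add.
  rewrite (_ : gm _ _ (gm _ _ (cone s'' w c)) = cone (h :: aj :: s'') w c) //.
  rewrite shift_cone; last by rewrite /gnz /= (gok_nz Gh) Haj; exact: Gs''.
  apply: IH; last by rewrite /= Kh Kaj.
    by move: Hk; rewrite Hc /= Ph eqxx /= Paj oppr_eq0 -lt0n Hab.
  by rewrite /= Gh Gaj.
rewrite (_ : gm _ _ (gm _ _ (cone s'' w c)) = cone (h :: bi :: s'') w c) //.
rewrite shift_cone; last by rewrite /gnz /= (gok_nz Gh) Hbi; exact: Gs''.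
apply: IH; last by rewrite /= Kh Kbi.
  by move: Hk; rewrite Hc /= Ph eqxx /= Pbi -lt0n Hab.
by rewrite /= Gh Gbi.
Qed.


End Elim2.

Lemma sum_uniq_pick (T : eqType) (W : zmodType) (U : seq T) (F : T -> W) x : uniq U ->
  \sum_(w <- U) (if x == w then F w else 0) = if x \in U then F x else 0.
Proof.
elim: U => [|w U IH] /=; first by rewrite big_nil.
move=> /andP[Hw Hu]; rewrite big_cons IH // inE.
case: (eqVneq x w) => [->|Hne] /=; last by rewrite add0r.
by rewrite (negbTE Hw) addr0.
Qed.

Lemma poly_expand R (V : lmodType Zloc) (p : mono R -> V) : is_poly 0 p ->
  exists U : seq (mono R), p = fun n => \sum_(w <- U) mon w (p w) n.
Proof.
move=> [S HS]; exists (undup S); apply: funext => n; rewrite /mon.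
rewrite sum_uniq_pick ?undup_uniq // mem_undup; case: ifP => // /negbT; exact: HS.
Qed.

Lemma ratser_sum_mem R (V : lmodType Zloc) allowed (I : eqType) (s : seq I) (F : I -> mono R -> V) :
  (forall i, i \in s -> ratser allowed (F i)) -> ratser allowed (fun n => \sum_(i <- s) F i n).
Proof.
elim: s => [|i s IH] H.
  have -> : (fun n : mono R => \sum_(i <- [::]) F i n) = @szero R V by apply: funext => n; rewrite big_nil.
  exact: ratser_zero.
have -> : (fun n => \sum_(j <- i :: s) F j n) = sadd (F i) (fun n => \sum_(j <- s) F j n).
  by apply: funext => n; rewrite big_cons.
apply: ratser_add; first by apply: H; rewrite mem_head.
by apply: IH => j Hj; apply: H; rewrite inE Hj orbT.
Qed.

Section Final.
Variable r : nat.
Notation R2 := (r + r)%N.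

Definition phi (e : 'I_r) (x : mono R2) : int := (x (lshift r e))%:Z - (x (rshift r e))%:Z.
Lemma phi_add e x y : phi e (madd x y) = phi e x + phi e y.
Proof. rewrite /phi !ffunE PoszD PoszD; lia. Qed.

Definition pureR (v : mono R2) := [forall j : 'I_r, v (lshift r j) == 0%N].
Definition fgok (g : int * mono R2) :=
  (g.2 != m0 R2) && ((g.1 < 0) || ((g.1 <= 0) && pureR g.2)).
Definition KD (D : seq 'I_r) (x : mono R2) := all (fun e => phi e x == 0) D.

Lemma fgok_nz g : fgok g -> g.2 != m0 R2.
Proof. by case/andP. Qed.

Lemma KD_add D x y : KD D x -> KD D y -> KD D (madd x y).
Proof.
move=> /allP H1 /allP H2; apply/allP => e He.
by rewrite phi_add (eqP (H1 e He)) (eqP (H2 e He)) addr0.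
Qed.

Lemma phi_scale e q x : phi e (mscale q x) = q%:Z * phi e x.
Proof. rewrite /phi !ffunE !PoszM mulrBr //. Qed.

Lemma KD_scale D q x : KD D x -> KD D (mscale q x).
Proof.
move=> /allP H; apply/allP => e He; by rewrite phi_scale (eqP (H e He)) mulr0.
Qed.

Lemma mscale_nz q (v : mono R2) : (0 < q)%N -> v != m0 R2 -> mscale q v != m0 R2.
Proof.
move=> Hq; apply: contraNneq => /ffunP E; apply/eqP/ffunP => i.
have := E i; rewrite !ffunE => /eqP; rewrite muln_eq0 (negbTE (lt0n_neq0 Hq)) /= => /eqP ->.
by [].
Qed.

Lemma fgok_scale g q : fgok g -> (0 < q)%N -> fgok (g.1 * q%:Z, mscale q g.2).
Proof.
move=> /andP[Hv Hm] Hq; rewrite /fgok /= mscale_nz //=.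
case/orP: Hm => [Hm|/andP[Hm Hp]].
  by rewrite pmulr_llt0 ?ltz_nat ?Hm.
apply/orP; right; apply/andP; split; first by rewrite pmulr_lle0 ?ltz_nat.
by apply/forallP => j; rewrite ffunE (eqP (forallP Hp j)) muln0.
Qed.

Lemma fgok_comb e g1 g2 : fgok g1 -> fgok g2 -> phi e g1.2 < 0 -> 0 < phi e g2.2 ->
  fgok (g1.1 + g2.1, madd g1.2 g2.2).
Proof.
move=> /andP[H1v H1m] /andP[H2v H2m] _ H2p.
have Hm1 : g1.1 <= 0 by case/orP: H1m => [/ltW|/andP[]].
have Hm2 : g2.1 < 0.
  case/orP: H2m => // /andP[_ /forallP /(_ e) /eqP E].
  by move: H2p; rewrite /phi E subr_gt0 ltNge.
rewrite /fgok /=; apply/andP; split.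
  apply: contraNneq H2v => /ffunP E; apply/eqP/ffunP => i.
  by have := E i; rewrite !ffunE => /eqP; rewrite addn_eq0 => /andP[_ /eqP ->].
by apply/orP; left; move: Hm1 Hm2; move: g1.1 g2.1 => x y; lia.
Qed.

Lemma step (P : lmodType Zloc) D e (F : mono R2 -> P) :
  Good fgok (KD D) F -> Good fgok (KD (e :: D)) F.
Proof.
move=> [L [HL HF]].
apply: (Good_ext (G := fun N => \sum_(d <- L) cv d N)).
  by move=> N /andP[_ HN]; exact: HF.
apply: Good_sum => d Hd; move/allP: HL => /(_ d Hd) /andP[H1 H2].
exact: (@part1_aux R2 P fgok fgok_nz (phi e) (phi_add e) (KD D) (@KD_add D) (@KD_scale D)
          fgok_scale (@fgok_comb e) _ d.1.1 d.1.2 d.2 (leqnn _) H1 H2).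
Qed.

Lemma iterD (P : lmodType Zloc) D (F : mono R2 -> P) :
  Good fgok (KD [::]) F -> Good fgok (KD D) F.
Proof. move=> H; elim: D => // e D IH; exact: step. Qed.

Definition diagv (v : mono R2) := [forall j : 'I_r, v (lshift r j) == v (rshift r j)].
Definition projL (v : mono R2) : mono r := [ffun j => v (lshift r j)].

Lemma diag_pr v : diagv v -> v = pr (projL v) (projL v).
Proof.
move=> /forallP H; apply/ffunP => i; rewrite ffunE -{1}(splitK i).
case: (split i) => j /=; rewrite ffunE //.
by rewrite (eqP (H j)).
Qed.

Lemma KD_all v : KD (enum 'I_r) v -> diagv v.
Proof.
move=> /allP H; apply/forallP => j; have := H j; rewrite mem_enum => /(_ isT).
by rewrite /phi subr_eq0 => /eqP [->].
Qed.

Lemma KD_pr n : KD (enum 'I_r) (pr n n).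
Proof. by apply/allP => e _; rewrite /phi pr_l pr_r subrr. Qed.

Lemma diag_pr_nn n : diagv (pr n n).
Proof. by apply/forallP => j; rewrite pr_l pr_r. Qed.

Lemma projL_nz v : diagv v -> v != m0 R2 -> projL v != m0 r.
Proof.
move=> Hd; apply: contraNneq => E; rewrite (diag_pr Hd) E.
by apply/eqP/ffunP => i; rewrite !ffunE; case: (split i) => j; rewrite ffunE.
Qed.

Lemma projL_pr a b : projL (pr a b) = a.
Proof. by apply/ffunP => j; rewrite ffunE pr_l. Qed.

Definition projg (g : int * mono R2) := (g.1, projL g.2).

Lemma cone_diag (P : lmodType Zloc) s w (c : P) n :
  all (fun g => diagv g.2) s -> gnz s ->
  cone s w c (pr n n) = if diagv w then cone (map projg s) (projL w) c n else 0.
Proof.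
elim: s n => [|g s IH] n /=.
  move=> _ _; rewrite /cone /= /mon; case: (boolP (diagv w)) => Hw.
    by rewrite {1}(diag_pr Hw) pr_eq andbb.
  by case: eqP => // E; move: Hw; rewrite -E diag_pr_nn.
move=> /andP[Hg Hs] /andP[Hv Hn].
have Hu := projL_nz Hg Hv.
set B := (msize n + msize n).+1.
have HB : (msize (pr n n) < B)%N by rewrite msize_pr.
rewrite /cone /= (gm_bound _ _ Hv HB).
have E : forall l, shift (g.1 * l%:Z) (mscale l g.2) (gfold s (mon w c)) (pr n n) =
   if diagv w then shift (g.1 * l%:Z) (mscale l (projL g.2)) (cone (map projg s) (projL w) c) n else 0.
  move=> l; rewrite !shift_eval {1 2}(diag_pr Hg) mscale_pr mle_pr andbb msub_pr.
  case: ifP => H; last by case: ifP.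
  rewrite -/(cone s w c) IH //; case: ifP => //; by rewrite scaler0.
rewrite (eq_bigr _ (fun l _ => E l)); case: ifP => Hw; last by rewrite big1.
by rewrite (gm_bound _ _ Hu (B := B)) // ltnS leq_addr.
Qed.

End Final.


Theorem lemma5p1 (r : nat) (M N P : lmodType Zloc) (t : M -> N -> P)
    (Ht : is_tensor_product t) (a : mono r -> M) (b : mono r -> N) :
  is_int a -> is_ssr b -> is_int (fun n => t (a n) (b n)).
Proof.
move=> Ha Hb; have Hbil := Ht.1.
move: Ha => /ratserE [p [sA [Hp [HsA ->]]]].
move: Hb => /ratserE [q [sB [Hq [HsB ->]]]].
have GA := rat_ok_gnz HsA; have GB := rat_ok_gnz HsB.
have [UA EA] := poly_expand Hp; have [UB EB] := poly_expand Hq.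
rewrite {1}EA {1}EB !gfold_sum.
set sAB := map (@liftL r) sA ++ map (@liftR r) sB.
have -> : (fun n => t (\sum_(w <- UA) gfold sA (mon w (p w)) n)
                      (\sum_(w <- UB) gfold sB (mon w (q w)) n)) =
   fun n => \sum_(w <- UA) \sum_(w' <- UB)
      cone sAB (pr w w') (t (p w) (q w')) (pr n n).
  apply: funext => n; rewrite tlsum //; apply: eq_bigr => w _.
  by rewrite trsum //; apply: eq_bigr => w' _; rewrite had.
apply: ratser_sum => w; apply: ratser_sum => w'.
set c := t (p w) (q w').
have HAB : all (@fgok r) sAB.
  rewrite all_cat !all_map; apply/andP; split; apply/allP => g Hg /=.
    move/allP: HsA => /(_ g Hg) /andP[Hm Hv].
    by rewrite /fgok /= pr_nz ?Hv //= Hm.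
  move/allP: HsB => /(_ g Hg) /andP[Hm Hv].
  rewrite /fgok /= pr_nz ?Hv ?orbT //= Hm /=.
  by apply/orP; right; apply/forallP => j; rewrite pr_l ffunE.
have G0 : Good (@fgok r) (KD [::]) (cone sAB (pr w w') c).
  by apply: Good_cone => //; apply/allP.
have [L [HL HF]] := iterD (enum 'I_r) G0.
have -> : (fun n => cone sAB (pr w w') c (pr n n)) =
  fun n => \sum_(d <- L) (if diagv d.1.2 then cone (map (@projg r) d.1.1) (projL d.1.2) d.2 n else 0).
  apply: funext => n; rewrite HF ?KD_pr // big_seq [RHS]big_seq; apply: eq_bigr => d Hd.
  move/allP: HL => /(_ d Hd) /andP[H1 H2].
  rewrite /cv (@cone_diag r P d.1.1 d.1.2 d.2 n) //; last exact: (gok_gnz (@fgok_nz r)).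
  by apply/allP => g Hg; apply: KD_all; exact: (allP H2 g Hg).
apply: ratser_sum_mem => d Hd; case: (boolP (diagv d.1.2)) => Hw /=; last exact: ratser_zero.
apply: ratser_cone; move/allP: HL => /(_ d Hd) /andP[H1 H2].
rewrite /rat_ok all_map; apply/allP => g Hg /=.
have Hdg : diagv g.2 by apply: KD_all; exact: (allP H2 g Hg).
move/allP: H1 => /(_ g Hg) /andP[Hv Hm].
rewrite projL_nz // andbT; case/orP: Hm => // /andP[_ /forallP Hp0].
case/eqP: Hv; rewrite (diag_pr Hdg); apply/ffunP => i; rewrite !ffunE.
by case: (split i) => j; rewrite ffunE (eqP (Hp0 j)).
Qed.
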